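(* Let $n\ge 3$ and let $K$ be a proper $4$-coloring of $H_2(n,n-1)$. Then $|T_x(K)|\le 2$ for all $x\in\mathbb{Z}_2^n$. Consequently $\mathrm{rb}(K)\le \frac{2}{n+1}$, with equality if and only if $|T_x(K)|=2$ for all $x\in\mathbb{Z}_2^n$.
   Context: $H_2(n,n-1)$ is the simple undirected graph with vertex set $\mathbb{Z}_2^n$ in which $x,y$ are adjacent iff their Hamming distance $|\{i:x_i\ne y_i\}|$ is at least $n-1$. For a simple graph $G=(V,E)$ and a proper $k$-coloring $K:V\to[k]$ (adjacent vertices receive different colors), an edge $(x,y)\in E$ is a transition edge for $K$ if the map obtained from $K$ by swapping the colors of $x$ and $y$ (i.e. assigning $K(y)$ to $x$, $K(x)$ to $y$, and keeping all other colors) is again a proper $k$-coloring. $T(K)$ is the set of transition edges, $T_x(K)=\{y: (x,y)\in T(K)\}$, and the robustness of $K$ is $\mathrm{rb}(K)=|T(K)|/|E|$ (edges counted as unordered pairs). *)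

(* Defs.v *)
From mathcomp Require Import all_boot all_order all_algebra.
Set Implicit Arguments. Unset Strict Implicit. Unset Printing Implicit Defensive.
Import Order.TTheory GRing.Theory Num.Theory.

(* Vertices of H_2(n,n-1): Z_2^n represented as functions 'I_n -> bool. *)
Definition vert (n : nat) := {ffun 'I_n -> bool}.

Definition hamming (n : nat) (x y : vert n) : nat := #|[set i | x i != y i]|.

Definition hadj (n : nat) (x y : vert n) : bool :=
  (x != y) && (n.-1 <= hamming x y).

Definition proper_col (T : finType) (adj : rel T) (k : nat) (K : T -> 'I_k) : Prop :=
  forall x y, adj x y -> K x != K y.

Definition swap_col (T : finType) (k : nat) (K : T -> 'I_k) (x y : T) : T -> 'I_k :=
  fun z => if z == x then K y else if z == y then K x else K z.

Definition is_transition (T : finType) (adj : rel T) (k : nat) (K : T -> 'I_k)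
  (x y : T) : bool :=
  adj x y && [forall u, forall v, adj u v ==> (swap_col K x y u != swap_col K x y v)].

Definition Tx (T : finType) (adj : rel T) (k : nat) (K : T -> 'I_k) (x : T) : {set T} :=
  [set y | is_transition adj K x y].

Definition edges (T : finType) (adj : rel T) : {set {set T}} :=
  [set e : {set T} | [exists x, exists y, adj x y && (e == [set x; y])]].

Definition trans_edges (T : finType) (adj : rel T) (k : nat) (K : T -> 'I_k)
  : {set {set T}} :=
  [set e : {set T} | [exists x, exists y, is_transition adj K x y && (e == [set x; y])]].

Definition rb (T : finType) (adj : rel T) (k : nat) (K : T -> 'I_k) : rat :=
  (#|trans_edges adj K|%:R / #|edges adj|%:R)%R.

(* Main.v *)
Require Import Defs.
From mathcomp Require Import all_boot all_order all_algebra zify.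
Import Order.TTheory GRing.Theory Num.Theory.
Set Implicit Arguments. Unset Strict Implicit.


Lemma hamming_sym n (x y : vert n) : hamming x y = hamming y x.
Proof. by rewrite /hamming; apply: eq_card => i; rewrite !inE eq_sym. Qed.
Lemma hadj_sym n : symmetric (@hadj n).
Proof. by move=> x y; rewrite /hadj eq_sym hamming_sym. Qed.
Lemma hadj_irr n : irreflexive (@hadj n).
Proof. by move=> x; rewrite /hadj eqxx. Qed.

Lemma swap_sym (T : finType) k (K : T -> 'I_k) x y : x != y -> swap_col K x y =1 swap_col K y x.
Proof.
move=> nxy z; rewrite /swap_col; case: eqVneq => [->|zx].
  by rewrite (negPf nxy).
by [].
Qed.

Lemma trans_sym (T : finType) (adj : rel T) k (K : T -> 'I_k) :
  symmetric adj -> irreflexive adj -> symmetric (is_transition adj K).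
Proof.
move=> sa ia x y; rewrite /is_transition sa; case Ha: (adj y x) => //=.
have nxy : x != y by apply/eqP => E; rewrite E ia in Ha.
apply: eq_forallb => u; apply: eq_forallb => v.
by rewrite (swap_sym K nxy u) (swap_sym K nxy v).
Qed.

Lemma trans_irr (T : finType) (adj : rel T) k (K : T -> 'I_k) :
  irreflexive adj -> irreflexive (is_transition adj K).
Proof. by move=> ia x; rewrite /is_transition ia. Qed.

Lemma dcount (T : finType) (r : rel T) : symmetric r -> irreflexive r ->
  (2 * #|edges r| = \sum_x #|[set y | r x y]|)%N.
Proof.
move=> sr ir.
have -> : (\sum_x #|[set y | r x y]| = \sum_(p : T * T | r p.1 p.2) 1)%N.
  under eq_bigr => x _ do rewrite -sum1_card.
  under eq_bigr => x _ do under eq_bigl => y do rewrite inE.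
  by rewrite (pair_big_dep xpredT (fun x y => r x y)).
rewrite (partition_big (fun p => [set p.1; p.2]) (mem (edges r))); last first.
  move=> p rp; rewrite /edges !inE.
  apply/existsP; exists p.1; apply/existsP; exists p.2.
  by rewrite rp eqxx.
rewrite mulnC -sum_nat_const.
apply: eq_bigr => e; rewrite /edges !inE => /existsP[x /existsP[y /andP[rxy /eqP ->]]].
rewrite sum1dep_card.
have nxy : x != y by apply/eqP => E; rewrite E ir in rxy.
have -> : [set p : T * T | r p.1 p.2 && ([set p.1; p.2] == [set x; y])] = [set (x, y); (y, x)].
  apply/setP => -[a b]; rewrite !inE /= !xpair_eqE.
  apply/idP/idP.
    move=> /andP[rab /eqP he].
    have : a \in [set x; y] by rewrite -he set21.
    have : b \in [set x; y] by rewrite -he set22.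
    move: rab; rewrite !inE => rab /orP[]/eqP Hb /orP[]/eqP Ha; subst a b;
      by rewrite ?ir ?eqxx ?orbT in rab *.
  case/orP => /andP[/eqP-> /eqP->]; first by rewrite rxy eqxx.
  by rewrite sr rxy setUC eqxx.
by rewrite cards2 xpair_eqE (negPf nxy).
Qed.

Lemma Some_eq n (i j : 'I_n) : (Some i == Some j) = (i == j).
Proof. by []. Qed.

Definition fv n (x : vert n) (a : option 'I_n) : vert n :=
  [ffun i => if Some i == a then x i else ~~ x i].

Lemma fv_inj n (x : vert n) : injective (fv x).
Proof.
move=> [a|] [b|] /ffunP H //.
- move/(_ a): H; rewrite !ffunE eqxx; case: eqP => [->|_] //; by case: (x a).
- move/(_ a): H; rewrite !ffunE eqxx /=; by case: (x a).
- move/(_ b): H; rewrite !ffunE eqxx /=; by case: (x b).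
Qed.

Lemma hamming_fv n (x : vert n) a : n.-1 <= hamming x (fv x a).
Proof.
rewrite /hamming; case: a => [j|].
  have -> : [set i | x i != fv x (Some j) i] = [set~ j].
    apply/setP => i; rewrite !inE ffunE /=.
    by case: (eqVneq i j) => [->|ij]; rewrite Some_eq ?eqxx ?(negPf ij); case: (x i).
  by rewrite cardsC1 card_ord.
have -> : [set i | x i != fv x None i] = setT.
  by apply/setP => i; rewrite !inE ffunE /=; case: (x i).
by rewrite cardsT card_ord leq_pred.
Qed.

Lemma hadj_fv n (x : vert n) a : 2 <= n -> hadj x (fv x a).
Proof.
move=> hn; rewrite /hadj hamming_fv andbT; apply/eqP => E.
have := hamming_fv x a; rewrite -E /hamming.
have -> : [set i | x i != x i] = set0 by apply/setP => i; rewrite !inE eqxx.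
rewrite cards0; lia.
Qed.

Lemma fv_surj n (x y : vert n) : hadj x y -> exists a, y = fv x a.
Proof.
case/andP => _ hd.
set A := [set i | x i == y i].
have hA : #|A| <= 1.
  have := cardsC A; rewrite card_ord.
  have -> : ~: A = [set i | x i != y i] by apply/setP => i; rewrite !inE.
  rewrite /hamming in hd; lia.
case: (set_0Vmem A) => [A0 | [j jA]].
  exists None; apply/ffunP => i; rewrite ffunE /=.
  have : i \notin A by rewrite A0 inE.
  by rewrite inE; case: (x i); case: (y i).
exists (Some j); apply/ffunP => i; rewrite ffunE /=.
case: (eqVneq i j) => [->|ij].
  by rewrite eqxx; move: jA; rewrite inE => /eqP.
have /negPf -> : Some i != Some j by apply/eqP => -[E]; rewrite E eqxx in ij.
have : i \notin A.
  apply/negP => iA.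
  have : #|[set i; j]| <= #|A| by apply: subset_leq_card; rewrite subUset !sub1set iA jA.
  rewrite cards2 ij; lia.
by rewrite inE; case: (x i); case: (y i).
Qed.

Lemma deg n (x : vert n) : 2 <= n -> #|[set y | hadj x y]| = n.+1.
Proof.
move=> hn.
have -> : [set y | hadj x y] = fv x @: setT.
  apply/setP => y; rewrite inE; apply/idP/idP.
    by case/fv_surj => a ->; apply: imset_f.
  by case/imsetP => a _ ->; apply: hadj_fv.
by rewrite card_imset; [rewrite cardsT card_option card_ord | apply: fv_inj].
Qed.

Lemma tr_color (T : finType) (adj : rel T) k (K : T -> 'I_k) x y w :
  irreflexive adj ->
  is_transition adj K x y -> adj x w -> w != y -> K y != K w.
Proof.
move=> ia /andP[hxy /forallP/(_ x)/forallP/(_ w)/implyP H] hxw nwy.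
have := H hxw; rewrite /swap_col eqxx.
have /negPf -> : w != x by apply/eqP => E; rewrite E ia in hxw.
by rewrite (negPf nwy).
Qed.

Lemma pig5 (a b c d e : 'I_4) : a != b -> a != c -> a != d -> a != e ->
  b != c -> b != d -> b != e -> c != d -> c != e -> d != e -> False.
Proof.
move: a b c d e => [a ha] [b hb] [c hc] [d hd] [e he].
rewrite -!val_eqE /=; lia.
Qed.

Lemma cardD1_ge (T : finType) (A : {set T}) y : #|A| <= (#|A :\ y|).+1.
Proof. by rewrite (cardsD1 y A); case: (y \in A). Qed.

Unset Implicit Arguments. Set Strict Implicit.
Local Open Scope ring_scope.

Theorem proposition4p9 (n : nat) (hn : (3 <= n)%N) (K : vert n -> 'I_4) :
  proper_col (@hadj n) K ->
  (forall x : vert n, (#|Tx (@hadj n) K x| <= 2)%N) /\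
  rb (@hadj n) K <= 2%:R / (n.+1)%:R /\
  (rb (@hadj n) K = 2%:R / (n.+1)%:R <->
     (forall x : vert n, #|Tx (@hadj n) K x| = 2%N)).
Proof.
move=> hp.
have hn2 : (2 <= n)%N by lia.
have Tb : forall x : vert n, (#|Tx (@hadj n) K x| <= 2)%N.
  move=> x; rewrite leqNgt; apply/negP => h3.
  set S := Tx (@hadj n) K x.
  have {}h3 : (2 < #|S|)%N by [].
  have [y1 y1S] : exists y, y \in S by apply/card_gt0P; lia.
  have c1 := cardD1_ge S y1.
  have [y2 y2S] : exists y, y \in S :\ y1 by apply/card_gt0P; lia.
  have c2 := cardD1_ge (S :\ y1) y2.
  have [y3 y3S] : exists y, y \in S :\ y1 :\ y2 by apply/card_gt0P; lia.
  set N := [set y | hadj x y].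
  have cN : #|N| = n.+1 by apply: deg.
  have d1 := cardD1_ge N y1.
  have d2 := cardD1_ge (N :\ y1) y2.
  have d3 := cardD1_ge (N :\ y1 :\ y2) y3.
  have [z zN] : exists z, z \in N :\ y1 :\ y2 :\ y3 by apply/card_gt0P; lia.
  rewrite !inE in y2S y3S zN.
  rewrite /S /Tx !inE in y1S y2S y3S.
  rewrite /N ?inE in zN.
  case/andP: y2S => [n21 t2].
  case/and3P: y3S => [n32 n31 t3].
  case/and4P: zN => [nz3 nz2 nz1 az].
  have t1 := y1S.
  have a1 : hadj x y1 by case/andP: t1.
  have a2 : hadj x y2 by case/andP: t2.
  have a3 : hadj x y3 by case/andP: t3.
  have ir := @hadj_irr n.
  apply: (@pig5 (K x) (K y1) (K y2) (K y3) (K z)).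
  - exact: hp.
  - exact: hp.
  - exact: hp.
  - exact: hp.
  - exact: (tr_color ir t1 a2 n21).
  - exact: (tr_color ir t1 a3 n31).
  - exact: (tr_color ir t1 az nz1).
  - exact: (tr_color ir t2 a3 n32).
  - exact: (tr_color ir t2 az nz2).
  - exact: (tr_color ir t3 az nz3).
set V := #|vert n|.
set E := #|edges (@hadj n)|.
set TE := #|trans_edges (@hadj n) K|.
set Ssum := (\sum_(x : vert n) #|Tx (@hadj n) K x|)%N.
have hE : (2 * E = V * n.+1)%N.
  rewrite /E dcount; [|exact: hadj_sym|exact: hadj_irr].
  under eq_bigr => x _ do rewrite deg //.
  by rewrite sum_nat_const.
have hTE : (2 * TE = Ssum)%N.
  have -> : TE = #|edges (is_transition (@hadj n) K)| by [].
  by rewrite dcount; [|apply: trans_sym; [exact: hadj_sym|exact: hadj_irr]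
                      |apply: trans_irr; exact: hadj_irr].
have hS : (Ssum <= 2 * V)%N.
  rewrite /Ssum; apply: leq_trans; first by apply: (@leq_sum _ _ _ _ (fun _ => 2%N)) => x _; exact: Tb.
  by rewrite sum_nat_const mulnC.
have hV : (0 < V)%N by apply/card_gt0P; exists [ffun=> false].
have E0 : E%:R != 0 :> rat by rewrite pnatr_eq0; lia.
have Eg : 0 < E%:R^-1 :> rat by rewrite invr_gt0 ltr0n; lia.
have -> : 2%:R / (n.+1)%:R = V%:R / E%:R :> rat.
  apply/eqP; rewrite eqr_div ?pnatr_eq0 //; last by lia.
  apply/eqP; have := congr1 (fun m : nat => m%:R : rat) hE; rewrite /= !natrM; by move=> h; exact h.
have -> : rb (@hadj n) K = TE%:R / E%:R by [].
split; first exact: Tb.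
split.
  by rewrite ler_pM2r // ler_nat; lia.
split.
  move/(mulIf (invr_neq0 E0))/eqP; rewrite eqr_nat => /eqP hTV.
  have hS2 : Ssum = (2 * V)%N by lia.
  have : (\sum_(x : vert n) (2 - #|Tx (@hadj n) K x|) == 0)%N.
    have h1 : (\sum_(x : vert n) ((2 - #|Tx (@hadj n) K x|) + #|Tx (@hadj n) K x|) =
               \sum_(x : vert n) (2 - #|Tx (@hadj n) K x|) + Ssum)%N by rewrite big_split.
    have h2 : (\sum_(x : vert n) ((2 - #|Tx (@hadj n) K x|) + #|Tx (@hadj n) K x|) = V * 2)%N.
      rewrite (eq_bigr (fun _ => 2%N)); first by rewrite sum_nat_const.
      by move=> x _; rewrite subnK // Tb.
    apply/eqP; lia.
  rewrite sum_nat_eq0 => /forallP H x.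
  have := H x; have := Tb x; lia.
move=> H2.
have hS2 : Ssum = (2 * V)%N.
  rewrite /Ssum (eq_bigr (fun _ => 2%N)); last by move=> x _; exact: H2.
  by rewrite sum_nat_const mulnC.
by congr (_ / _); congr (_%:R); lia.
Qed.
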